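(* Let $n\ge 4$. Consider the two-graph Moran process on $n$ vertices in which the resident graph $G_R$ is the undirected star $K_{1,n-1}$ and the mutant graph $G_M$ is the clique $K_n$. If $r>\big((n-4)!\big)^{-1/(n-2)}$, then the fixation probability satisfies $$f_{G_R,G_M}(r)\ \ge\ \frac{1-\frac1n}{1+\frac{1}{r(n-2)}+\frac{1}{r^2(n-3)}}\ >\ 1-\frac1n-\frac{1}{r(n-2)}-\frac{1}{r^2(n-3)}.$$
   Context: Two-graph Moran process: vertex set $V=\{1,\dots,n\}$; resident graph $G_R=(V,E_R)$ and mutant graph $G_M=(V,E_M)$, strongly connected, with row-stochastic weight matrices $W_R=[w^R_{ij}]$, $W_M=[w^M_{ij}]$ ($w^R_{ij}>0$ iff $(i,j)\in E_R$, similarly for $M$). The state is the mutant set $S$; residents have fitness $1$, mutants fitness $r>0$. Each step a vertex $i$ is chosen with probability proportional to fitness; if $i$ is a mutant, it picks $j$ with probability $w^M_{ij}$ and $j$ becomes a mutant; if a resident, it picks $j$ with probability $w^R_{ij}$ and $j$ becomes a resident. Absorption at $S=\emptyset$ or $S=V$ (fixation). The fixation probability $f_{G_R,G_M}(r)$ is the probability of fixation when starting with one mutant at a uniformly random vertex. Undirected graphs are unweighted: $w_{ij}=1/\deg(i)$ for each neighbour $j$ of $i$ (edges in both directions). Thus for the clique $K_n$, $w_{ij}=1/(n-1)$ for all $j\ne i$. *)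

(* Defs.v *)
From HB Require Import structures.
From mathcomp Require Import all_boot all_order all_algebra.
From mathcomp Require Import all_classical all_reals all_analysis.
Set Implicit Arguments. Unset Strict Implicit. Unset Printing Implicit Defensive.
Import Order.TTheory GRing.Theory Num.Theory numFieldNormedType.Exports.
Local Open Scope ring_scope.

Section Moran.
Variables (R : realType) (n : nat).

Definition weights := 'I_n -> 'I_n -> R.

Definition total_fitness (r : R) (S : {set 'I_n}) : R :=
  r * #|S|%:R + (n - #|S|)%:R.

Definition moran_trans (wR wM : weights) (r : R) (S T : {set 'I_n}) : R :=
  \sum_(i : 'I_n) \sum_(j : 'I_n)
    (if i \in S
     then r / total_fitness r S * wM i j * (T == j |: S)%:R
     else 1 / total_fitness r S * wR i j * (T == S :\ j)%:R).

Fixpoint moran_dist (wR wM : weights) (r : R) (S0 : {set 'I_n}) (t : nat)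
    : {set 'I_n} -> R :=
  match t with
  | 0 => fun T => (T == S0)%:R
  | t'.+1 => fun T =>
      \sum_(U : {set 'I_n}) moran_dist wR wM r S0 t' U * moran_trans wR wM r U T
  end.

(* Probability of fixation (absorption at S = V) from S0: since V is absorbing,
   this is the limit of the probability of being at V after t steps. *)
Definition fixation_from (wR wM : weights) (r : R) (S0 : {set 'I_n}) : R :=
  limn (fun t => moran_dist wR wM r S0 t [set: 'I_n]).

Definition fixation_prob (wR wM : weights) (r : R) : R :=
  n%:R^-1 * \sum_(i : 'I_n) fixation_from wR wM r [set i].

Definition clique_weights : weights :=
  fun i j => if i == j then 0 else (n.-1)%:R^-1.

(* Star K_{1,n-1} (unweighted, undirected) with centre the vertex of index 0:
   the centre has degree n-1, each leaf has degree 1 (adjacent to the centre). *)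
Definition star_weights : weights :=
  fun i j => if i == j then 0
             else if val i == 0%N then (n.-1)%:R^-1
             else if val j == 0%N then 1 else 0.

End Moran.

Arguments clique_weights R n : clear implicits.
Arguments star_weights R n : clear implicits.

(* Main.v *)
Require Import Defs.
From HB Require Import structures.
From mathcomp Require Import all_boot all_order all_algebra.
From mathcomp Require Import all_classical all_reals all_analysis.
From mathcomp Require Import ring lra zify.
Import Order.TTheory GRing.Theory Num.Theory numFieldNormedType.Exports.
Local Open Scope ring_scope.
Local Open Scope classical_set_scope.
Section Chain.
Variables (R : realType) (n : nat) (wR wM : weights R n) (r : R).
Local Notation P := (moran_trans wR wM r).
Local Notation D := (moran_dist wR wM r).
Hypothesis Pge0 : forall S T, 0 <= P S T.
Hypothesis Psum : forall S, \sum_T P S T = 1.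

Definition Ef S0 t (f : {set 'I_n} -> R) := \sum_S D S0 t S * f S.

Lemma D_ge0 S0 t S : 0 <= D S0 t S.
Proof.
elim: t S => [|t IH] S /=; first by rewrite ler0n.
by apply: sumr_ge0 => U _; apply: mulr_ge0.
Qed.

Lemma E_step S0 t f : Ef S0 t.+1 f = \sum_U D S0 t U * (\sum_T P U T * f T).
Proof.
rewrite /Ef /=.
under eq_bigr => S _ do rewrite mulr_suml.
rewrite exchange_big /=; apply: eq_bigr => U _.
by rewrite mulr_sumr; apply: eq_bigr => T _; rewrite mulrA.
Qed.

Lemma E0 S0 f : Ef S0 0 f = f S0.
Proof.
rewrite /Ef /= (bigD1 S0) //= eqxx mul1r big1 ?addr0 // => S /negbTE ->.
by rewrite mul0r.
Qed.

Lemma Ef1 S0 t : Ef S0 t (fun=> 1) = \sum_S D S0 t S.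
Proof. by apply: eq_bigr => S _; rewrite mulr1. Qed.

Lemma D_sum S0 t : \sum_S D S0 t S = 1.
Proof.
elim: t => [|t IH]; first by rewrite -Ef1 E0.
rewrite -Ef1 E_step -[RHS]IH; apply: eq_bigr => U _.
by under eq_bigr do rewrite mulr1; rewrite Psum mulr1.
Qed.

Lemma E_mono S0 t f : (forall U, f U <= \sum_T P U T * f T) -> Ef S0 t f <= Ef S0 t.+1 f.
Proof.
move=> Hf; rewrite E_step; apply: ler_sum => U _.
by apply: ler_wpM2l; [apply: D_ge0|apply: Hf].
Qed.

Lemma E_le S0 t f c : (forall U, f U <= c) -> Ef S0 t f <= c.
Proof.
move=> Hf; rewrite -[c]mul1r -(D_sum S0 t) mulr_suml; apply: ler_sum => U _.
by apply: ler_wpM2l; [apply: D_ge0|apply: Hf].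
Qed.

Lemma E_ge S0 t f c : (forall U, c <= f U) -> c <= Ef S0 t f.
Proof.
move=> Hf; rewrite -[c]mul1r -(D_sum S0 t) mulr_suml; apply: ler_sum => U _.
by apply: ler_wpM2l; [apply: D_ge0|apply: Hf].
Qed.

Definition qf (h : {set 'I_n} -> R) U := \sum_T P U T * (h T - h U) ^+ 2.

Lemma qf_ge0 h U : 0 <= qf h U.
Proof. by apply: sumr_ge0 => T _; apply: mulr_ge0 => //; apply: sqr_ge0. Qed.

Lemma sq_step h U : 0 <= h U -> h U <= \sum_T P U T * h T ->
  qf h U <= \sum_T P U T * (h T ^+ 2) - h U ^+ 2.
Proof.
move=> h0 hs.
have e : qf h U = \sum_T P U T * (h T ^+ 2) - 2 * h U * (\sum_T P U T * h T)
     + h U ^+ 2 * (\sum_T P U T).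
  rewrite /qf !mulr_sumr -sumrB -big_split /=; apply: eq_bigr => T _; ring.
rewrite e Psum mulr1.
set a := \sum_T P U T * h T in hs *.
nra.
Qed.

Lemma tele S0 h t : (forall U, 0 <= h U) -> (forall U, h U <= \sum_T P U T * h T) ->
  \sum_(0 <= s < t) \sum_U D S0 s U * qf h U <=
  Ef S0 t (fun S => h S ^+ 2) - Ef S0 0 (fun S => h S ^+ 2).
Proof.
move=> h0 hs; elim: t => [|t IH]; first by rewrite big_geq // subrr.
rewrite big_nat_recr //=.
have : \sum_U D S0 t U * qf h U <=
   Ef S0 t.+1 (fun S => h S ^+ 2) - Ef S0 t (fun S => h S ^+ 2).
  rewrite E_step /Ef -sumrB; apply: ler_sum => U _.
  rewrite -mulrBr; apply: ler_wpM2l; first exact: D_ge0.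
  exact: sq_step.
move: IH; set a := Ef S0 t _; set b := Ef S0 t.+1 _; set c := Ef S0 0 _.
move=> H1 H2; lra.
Qed.

Lemma fix_lower S0 V (h : {set 'I_n} -> R) :
  (forall S, 0 <= h S <= 1) -> h V = 1 ->
  (forall S, h S <= \sum_T P S T * h T) ->
  (forall S, S != V -> h S = 0 \/ 0 < qf h S) ->
  h S0 <= limn (fun t => D S0 t V).
Proof.
move=> h01 hV hs hq.
have h0 U : 0 <= h U by case/andP: (h01 U).
have h1 U : h U <= 1 by case/andP: (h01 U).
pose e t := Ef S0 t h.
have emono : {homo e : a b / (a <= b)%N >-> a <= b}.
  by apply/nondecreasing_seqP => t; apply: E_mono.
have ecvg : cvgn e.
  apply: nondecreasing_is_cvgn => //; exists 1 => _ [t _ <-]; exact: E_le.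
have ege : h S0 <= limn e.
  by rewrite -(E0 S0 h); apply: (nondecreasing_cvgn_le emono ecvg 0).
have Dto0 U : 0 < qf h U -> (fun t => D S0 t U) @ \oo --> 0.
  move=> qpos; apply: cvg_series_cvg_0.
  apply: nondecreasing_is_cvgn.
    apply/nondecreasing_seqP => t; rewrite /series /= big_nat_recr //=.
    by rewrite lerDl D_ge0.
  exists (qf h U)^-1 => _ [t _ <-]; rewrite /series /=.
  rewrite -[X in _ <= X]mul1r ler_pdivlMr // mulr_suml.
  apply: (le_trans (y := \sum_(0 <= s < t) \sum_U' D S0 s U' * qf h U')).
    apply: ler_sum => s _.
    rewrite (bigD1 U) //= lerDl; apply: sumr_ge0 => U' _.
    by apply: mulr_ge0; [apply: D_ge0|apply: qf_ge0].
  have := (@tele S0 h t h0 hs).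
  have : Ef S0 t (fun S => h S ^+ 2) <= 1.
    by apply: E_le => S; rewrite expr_le1.
  have : 0 <= Ef S0 0 (fun S => h S ^+ 2).
    by apply: E_ge => S; apply: sqr_ge0.
  lra.
pose z t := \sum_(S | S != V) D S0 t S * h S.
have zcvg : z @ \oo --> (\sum_(S | S != V) (0 : R)).
  apply: cvg_big => //; first exact: add_continuous.
  move=> S SV; have [->|qpos] := hq S SV.
    by under eq_fun do rewrite mulr0; apply: cvg_cst.
  rewrite -(mul0r (h S)); apply: cvgMl. exact: Dto0.
rewrite big1 // in zcvg.
have DE : (fun t => D S0 t V) = e \- z.
  apply: funext => t /=; rewrite /e /z /Ef /= (bigD1 V) //= hV mulr1; lra.
rewrite DE.
have -> : limn (e \- z) = limn e - 0 by apply: cvg_lim => //; apply: cvgB.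
by rewrite subr0.
Qed.

End Chain.
Section Trans.
Variables (R : realType) (n : nat) (wR wM : weights R n) (r : R).
Local Notation P := (moran_trans wR wM r).

Lemma transE S (phi : {set 'I_n} -> R) :
  \sum_T P S T * phi T =
  \sum_i \sum_j (if i \in S then r / total_fitness r S * wM i j * phi (j |: S)
                 else 1 / total_fitness r S * wR i j * phi (S :\ j)).
Proof.
rewrite /moran_trans.
under eq_bigr => T _ do rewrite mulr_suml.
rewrite exchange_big; apply: eq_bigr => i _.
under eq_bigr => T _ do rewrite mulr_suml.
rewrite exchange_big; apply: eq_bigr => j _.
case: (i \in S).
  rewrite (bigD1 (j |: S)) //= eqxx mulr1 big1 ?addr0 // => T /negbTE ->.
  by rewrite mulr0 mul0r.
rewrite (bigD1 (S :\ j)) //= eqxx mulr1 big1 ?addr0 // => T /negbTE ->.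
by rewrite mulr0 mul0r.
Qed.

Hypothesis wRge0 : forall i j, 0 <= wR i j.
Hypothesis wMge0 : forall i j, 0 <= wM i j.
Hypothesis wRsum : forall i, \sum_j wR i j = 1.
Hypothesis wMsum : forall i, \sum_j wM i j = 1.
Hypothesis r0 : 0 < r.
Hypothesis n0 : (0 < n)%N.

Lemma card_le_n (S : {set 'I_n}) : (#|S| <= n)%N.
Proof. by rewrite -[X in (_ <= X)%N](card_ord n) max_card. Qed.

Lemma F_gt0 (S : {set 'I_n}) : 0 < total_fitness r S.
Proof.
rewrite /total_fitness.
have [->|Sp] := posnP #|S|.
  by rewrite mulr0 add0r subn0 ltr0n.
apply: ltr_pwDl; last by rewrite ler0n.
by apply: mulr_gt0 => //; rewrite ltr0n.
Qed.

Lemma P_ge0 S T : 0 <= P S T.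
Proof.
apply: sumr_ge0 => i _; apply: sumr_ge0 => j _.
have F0 := F_gt0 S.
case: (i \in S); apply: mulr_ge0; try apply: mulr_ge0; rewrite ?ler0n //.
- by apply: divr_ge0; [apply: ltW|apply: ltW].
- by apply: divr_ge0; [apply: ler01|apply: ltW].
Qed.

Lemma P_sum S : \sum_T P S T = 1.
Proof.
have F0 := F_gt0 S.
have -> : \sum_T P S T = \sum_T P S T * 1 by apply: eq_bigr => T _; rewrite mulr1.
rewrite transE.
have -> : \sum_i \sum_j (if i \in S then r / total_fitness r S * wM i j * 1
                 else 1 / total_fitness r S * wR i j * 1) =
          \sum_i (if i \in S then r / total_fitness r S else 1 / total_fitness r S).
  apply: eq_bigr => i _; case: (i \in S).
    by under eq_bigr do rewrite mulr1; rewrite -mulr_sumr wMsum mulr1.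
  by under eq_bigr do rewrite mulr1; rewrite -mulr_sumr wRsum mulr1.
rewrite (bigID (fun i => i \in S)) /=.
under eq_bigr => i iS do rewrite iS.
under [X in _ + X = _]eq_bigr => i iS do rewrite (negbTE iS).
rewrite !sumr_const.
have cS : #|[pred i | i \in S]| = #|S| by apply: eq_card.
have cC : #|[pred i | i \notin S]| = (n - #|S|)%N.
  by have e := cardC (mem S); rewrite card_ord in e; rewrite -[X in (X - _)%N]e addKn.
rewrite cS cC /total_fitness.
have Fne : r * #|S|%:R + (n - #|S|)%:R != 0 by rewrite gt_eqF //; exact: F0.
rewrite -[r / _ *+ #|S|]mulr_natr -[1 / _ *+ (n - #|S|)]mulr_natr.
by rewrite mulrAC [X in _ + X]mulrAC mul1r -mulrDl divff.
Qed.
End Trans.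
Local Close Scope classical_set_scope.
Section Valley.
Variable R : realType.

Lemma umono (u : nat -> R) a : (forall i, (a <= i)%N -> u i <= u i.+1) ->
  forall k m, (a <= k)%N -> (k <= m)%N -> u k <= u m.
Proof.
move=> hu k m ak; elim: m => [|m IH]; first by rewrite leqn0 => /eqP ->.
rewrite leq_eqVlt => /orP [/eqP -> //|]; rewrite ltnS => km.
apply: (le_trans (IH km)); apply: hu; exact: leq_trans km.
Qed.

Lemma valley (x u : nat -> R) a :
  (forall i, x i.+1 = x i * u i) -> (forall i, 0 <= x i) ->
  (forall i, (a <= i)%N -> u i <= u i.+1) ->
  forall b i, (a <= i <= b)%N -> x i <= Num.max (x a) (x b).
Proof.
move=> hx x0 hu b; elim: b => [|b IH] i /andP [ai ib].
  move: ib; rewrite leqn0 => /eqP ie; move: ai; rewrite ie leqn0 => /eqP ->.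
  by rewrite le_max lexx.
move: ib; rewrite leq_eqVlt => /orP [/eqP ->|]; first by rewrite le_max lexx orbT.
rewrite ltnS => ib.
have ab : (a <= b)%N by apply: leq_trans ib.
apply: (le_trans (IH i _)); first by rewrite ai ib.
rewrite ge_max le_max lexx /= le_max.
have [ub|ub] := leP 1 (u b).
  apply/orP; right; rewrite hx -{1}(mulr1 (x b)); apply: ler_wpM2l => //.
apply/orP; left.
have dec : forall k, (a + k <= b)%N -> x (a + k)%N <= x a.
  elim=> [|k IHk] hk; first by rewrite addn0 lexx.
  rewrite addnS in hk *; rewrite hx; apply: (le_trans _ (IHk (ltnW hk))).
  rewrite -{2}(mulr1 (x (a + k)%N)); apply: ler_wpM2l => //.
  apply: ltW; apply: (le_lt_trans _ ub); apply: (@umono u a hu) => //.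
    exact: leq_addr.
  exact: ltnW.
by have := dec (b - a)%N; rewrite subnKC // leqnn => /(_ isT).
Qed.
End Valley.
Section Model.
Variables (R : realType) (n : nat) (r : R).
Hypothesis hn : (4 <= n)%N.
Hypothesis r0 : 0 < r.

Lemma n0 : (0 < n)%N. Proof. exact: leq_trans hn. Qed.
Definition c0 : 'I_n := Ordinal n0.
Local Notation wR := (star_weights R n).
Local Notation wM := (clique_weights R n).
Definition kap : R := (n.-1)%:R^-1.

Lemma kap_gt0 : 0 < kap.
Proof. by rewrite invr_gt0 ltr0n -ltnS prednK ?n0 //; apply: leq_trans hn. Qed.

Lemma eq_c0 (j : 'I_n) : (j == c0) = (val j == 0%N).
Proof. by rewrite -val_eqE. Qed.

Lemma card_neq (i : 'I_n) : #|[pred j | i != j]| = n.-1.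
Proof.
have -> : #|[pred j | i != j]| = #|predC1 i|.
  by apply: eq_card => j; rewrite !inE eq_sym.
by rewrite cardC1 card_ord.
Qed.

Lemma sum_neq (i : 'I_n) (c : R) :
  \sum_j (if i == j then 0 else c) = c *+ n.-1.
Proof.
rewrite (bigID (fun j => i == j)) /= big1 => [|j /eqP -> //]; last by rewrite eqxx.
rewrite add0r.
under eq_bigr => j /negbTE -> do [].
by rewrite sumr_const card_neq.
Qed.

Lemma kapn : kap *+ n.-1 = 1.
Proof.
rewrite -mulr_natr /kap mulVf // pnatr_eq0 -lt0n -ltnS prednK ?n0 //.
exact: leq_trans hn.
Qed.

Lemma wM_ge0 i j : 0 <= wM i j.
Proof. by rewrite /clique_weights; case: eqP => _ //; apply: ltW; apply: kap_gt0. Qed.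

Lemma wR_ge0 i j : 0 <= wR i j.
Proof.
rewrite /star_weights; case: eqP => _ //; case: eqP => _; first by apply: ltW; apply: kap_gt0.
by case: eqP.
Qed.

Lemma wM_sum i : \sum_j wM i j = 1.
Proof. by rewrite /clique_weights sum_neq -/kap kapn. Qed.

Lemma wR_sum i : \sum_j wR i j = 1.
Proof.
rewrite /star_weights; case: (boolP (val i == 0%N)) => i0.
  by rewrite sum_neq -/kap kapn.
have ic : i != c0 by rewrite eq_c0.
rewrite (bigD1 c0) //= (negbTE ic) big1 ?addr0 // => j jc.
by rewrite -eq_c0 (negbTE jc); case: eqP.
Qed.

Definition rho (i : nat) : R := r * (if (i < n.-1)%N then (n.-1 - i)%:R else 1).
Fixpoint pi (k : nat) : R := if k is k'.+1 then pi k' / rho k else 1.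
Definition Z : R := \sum_(0 <= j < n) pi j.
Definition g (k : nat) : R := (\sum_(0 <= j < k) pi j) / Z.

Lemma rho_gt0 i : 0 < rho i.
Proof.
rewrite /rho; apply: mulr_gt0 => //; case: ifP => // lt.
by rewrite ltr0n subn_gt0.
Qed.

Lemma pi_gt0 k : 0 < pi k.
Proof. by elim: k => [|k IH] //=; apply: divr_gt0 => //; apply: rho_gt0. Qed.

Lemma pi_rec k : pi k.+1 * rho k.+1 = pi k.
Proof. by rewrite /= mulfVK // gt_eqF // rho_gt0. Qed.

Lemma psum_ge0 k : 0 <= \sum_(0 <= j < k) pi j.
Proof. by apply: sumr_ge0 => j _; apply: ltW; apply: pi_gt0. Qed.

Lemma Z_gt0 : 0 < Z.
Proof.
rewrite /Z; case: n n0 => // m _; rewrite big_nat_recr //=.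
by apply: ltr_pwDr; [apply: pi_gt0|apply: psum_ge0].
Qed.

Lemma g0 : g 0 = 0.
Proof. by rewrite /g big_geq // mul0r. Qed.

Lemma gn : g n = 1.
Proof. by rewrite /g -/Z divff // gt_eqF // Z_gt0. Qed.

Lemma gS k : g k.+1 = g k + pi k / Z.
Proof. by rewrite /g big_nat_recr //= mulrDl. Qed.

Lemma g_mono k m : (k <= m)%N -> g k <= g m.
Proof.
elim: m => [|m IH]; first by rewrite leqn0 => /eqP ->.
rewrite leq_eqVlt => /orP [/eqP -> //|]; rewrite ltnS => /IH le.
rewrite gS; apply: (le_trans le); rewrite lerDl; apply: divr_ge0.
  by apply: ltW; apply: pi_gt0.
by apply: ltW; apply: Z_gt0.
Qed.

Lemma g_ge0 k : 0 <= g k.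
Proof. by rewrite -g0; apply: g_mono. Qed.

Lemma g_lt k m : (k < m)%N -> g k < g m.
Proof.
move=> km; apply: (lt_le_trans (y := g k.+1)); last exact: g_mono.
rewrite gS ltrDl; apply: divr_gt0; [apply: pi_gt0|apply: Z_gt0].
Qed.

Lemma g_lt1 k : (k < n)%N -> g k < 1.
Proof. by move=> kn; rewrite -gn; apply: g_lt. Qed.

Lemma g_le1 k : (k <= n)%N -> g k <= 1.
Proof. by move=> kn; rewrite -gn; apply: g_mono. Qed.

Implicit Types (S : {set 'I_n}) (j : 'I_n).
Definition L (S : {set 'I_n}) := #|S :\ c0|.
Definition h (S : {set 'I_n}) : R := if S == finset.setT then 1 else g (L S).

Lemma L_le S : (L S <= n.-1)%N.
Proof.
apply: (leq_trans (n := #|[set: 'I_n] :\ c0|)).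
  by apply: subset_leq_card; apply: finset.setSD; apply: finset.subsetT.
have e := cardsD1 c0 [set: 'I_n]; rewrite cardsT card_ord finset.in_setT /= in e.
by rewrite [X in (_ <= X.-1)%N]e add1n /=.
Qed.

Lemma L_lt S : (L S < n)%N.
Proof. by apply: (leq_ltn_trans (L_le S)); rewrite prednK ?n0 // ltnSn. Qed.

Lemma h01 S : 0 <= h S <= 1.
Proof.
rewrite /h; case: ifP => _; first by rewrite ler01 lexx.
by rewrite g_ge0 g_le1 // ltnW // L_lt.
Qed.

Lemma hT : h finset.setT = 1.
Proof. by rewrite /h eqxx. Qed.

Lemma notT S j : j \notin S -> S != finset.setT.
Proof. by apply: contraNneq => ->; rewrite finset.in_setT. Qed.
Arguments notT {S j}.

Lemma h_nT S : S != finset.setT -> h S = g (L S).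
Proof. by rewrite /h => /negbTE ->. Qed.
Arguments h_nT {S}.

Lemma h0 : h finset.set0 = 0.
Proof.
rewrite h_nT; last by apply: (@notT _ c0); rewrite finset.in_set0.
by rewrite /L (_ : finset.set0 :\ c0 = finset.set0) ?cards0 ?g0 //; apply/setP => x; rewrite !inE andbF.
Qed.

Lemma LU1 S j : j \notin S -> j != c0 -> L (j |: S) = (L S).+1.
Proof.
move=> jS jc; rewrite /L.
have -> : (j |: S) :\ c0 = j |: (S :\ c0).
  apply/setP => x; rewrite !inE; case: (eqVneq x j) => [->|] //=.
  by rewrite jc.
by rewrite cardsU1 !inE (negbTE jS) andbF.
Qed.

Lemma LU1c S : L (c0 |: S) = L S.
Proof.
rewrite /L (_ : (c0 |: S) :\ c0 = S :\ c0) //; apply/setP => x; rewrite !inE.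
by case: (x == c0).
Qed.

Lemma LD1c S : L (S :\ c0) = L S.
Proof.
rewrite /L (_ : (S :\ c0) :\ c0 = S :\ c0) //; apply/setP => x; rewrite !inE.
by case: (x == c0).
Qed.

Lemma LU1le S j : (L S <= L (j |: S))%N.
Proof. by apply: subset_leq_card; apply: finset.setSD; apply: finset.subsetUr. Qed.

Lemma h_mono S j : h S <= h (j |: S).
Proof.
case: (eqVneq S finset.setT) => [->|ST].
  by rewrite (_ : j |: finset.setT = finset.setT) // ; apply/setP => x; rewrite !inE orbT.
rewrite (h_nT ST) /h; case: ifP => _.
  by rewrite g_le1 // ltnW // L_lt.
by apply: g_mono; apply: LU1le.
Qed.

Lemma h_strict S j : j \notin S -> j != c0 -> h S < h (j |: S).
Proof.
move=> jS jc; rewrite (h_nT (notT jS)) /h; case: ifP => _.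
  by apply: g_lt1; apply: L_lt.
by rewrite LU1 //; apply: g_lt.
Qed.

Lemma L_noc S : c0 \notin S -> L S = #|S|.
Proof.
move=> cS; rewrite /L (_ : S :\ c0 = S) //; apply/setP => x; rewrite !inE.
by case: (eqVneq x c0) => [->|] //=; rewrite (negbTE cS).
Qed.

Lemma cS_noT S : c0 \notin S -> S != finset.setT.
Proof. exact: notT. Qed.
Arguments cS_noT {S}.

Lemma dh_add S j : c0 \notin S -> j \notin S -> j != c0 ->
  h (j |: S) - h S = pi (L S) / Z.
Proof.
move=> cS jS jc.
have jST : j |: S != finset.setT by apply: (@notT _ c0); rewrite !inE negb_or eq_sym jc.
by rewrite (h_nT jST) (h_nT (notT jS)) LU1 // gS addrC addKr.
Qed.

Lemma dh_del S j : c0 \notin S -> j \in S ->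
  h (S :\ j) - h S = - (pi (L S).-1 / Z).
Proof.
move=> cS jS.
have jc : j != c0 by apply: contraNneq cS => <-.
have SE : S = j |: (S :\ j) by rewrite finset.setD1K.
have jS' : j \notin S :\ j by rewrite !inE eqxx.
have cS' : c0 \notin S :\ j by rewrite !inE negb_and cS orbT.
have := @dh_add _ _ cS' jS' jc; rewrite -SE => e.
by rewrite [in RHS]SE LU1 //= -e opprB.
Qed.

Lemma dh_full S : c0 \notin S -> L S = n.-1 -> h (c0 |: S) - h S = pi n.-1 / Z.
Proof.
move=> cS LS.
have full : c0 |: S = finset.setT.
  apply/eqP; rewrite eqEcard finset.subsetT cardsT card_ord cardsU1 cS -L_noc // LS.
  by rewrite /= add1n prednK ?n0.
rewrite full hT (h_nT (cS_noT cS)) LS -gn.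
by rewrite -{1}(prednK n0) gS addrC addKr.
Qed.

Local Notation P := (moran_trans wR wM r).
Local Notation tf S := (total_fitness r S).

Lemma Psum S : \sum_T P S T = 1.
Proof. exact: (@P_sum R n wR wM r wR_sum wM_sum r0 n0). Qed.

Lemma Pge0 S T : 0 <= P S T.
Proof. exact: (@P_ge0 R n wR wM r wR_ge0 wM_ge0 r0 n0). Qed.

Lemma tf_gt0 S : 0 < tf S.
Proof. exact: (@F_gt0 R n r r0 n0). Qed.

Lemma transD S : \sum_T P S T * h T - h S =
  \sum_i \sum_j (if i \in S then r / tf S * wM i j * (h (j |: S) - h S)
                 else 1 / tf S * wR i j * (h (S :\ j) - h S)).
Proof.
rewrite -(transE R n wR wM r S (fun T => h T - h S)).
under [X in _ = X]eq_bigr => T _ do rewrite mulrBr.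
by rewrite sumrB -mulr_suml Psum mul1r.
Qed.

Lemma wM_off i j : i != j -> wM i j = kap.
Proof. by rewrite /clique_weights => /negbTE ->. Qed.

Lemma wR_c0 j : c0 != j -> wR c0 j = kap.
Proof. by rewrite /star_weights => /negbTE ->. Qed.

Lemma wR_leaf i j : i != c0 -> wR i j = if (i != j) && (j == c0) then 1 else 0.
Proof.
move=> ic; rewrite /star_weights -!eq_c0 (negbTE ic).
by case: (i == j).
Qed.

Lemma coefM_ge0 S i j : 0 <= r / tf S * wM i j.
Proof.
apply: mulr_ge0; last exact: wM_ge0.
by apply: divr_ge0; apply: ltW => //; apply: tf_gt0.
Qed.

Lemma coefR_ge0 S i j : 0 <= 1 / tf S * wR i j.
Proof.
apply: mulr_ge0; last exact: wR_ge0.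
by apply: divr_ge0; [apply: ler01|apply: ltW; apply: tf_gt0].
Qed.

Lemma setD1_id S j : j \notin S -> S :\ j = S.
Proof.
move=> jS; apply/setP => x; rewrite !inE.
by case: (eqVneq x j) => [->|] //=; rewrite (negbTE jS).
Qed.

Lemma cardA S : c0 \notin S ->
  #|[set j | (j \notin S) && (j != c0)]| = (n.-1 - L S)%N.
Proof.
move=> cS.
have -> : [set j | (j \notin S) && (j != c0)] = (~: S) :\ c0.
  by apply/setP => x; rewrite !inE andbC.
have e := cardsD1 c0 (~: S); rewrite !inE cS /= in e.
have e2 := cardsC S; rewrite card_ord in e2.
rewrite L_noc //; rewrite add1n in e; move: e e2; set x := #|_ :\ _|; set y := #|~: S|; set z := #|S|.
move=> e e2; rewrite -e2 e; lia.
Qed.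

Lemma eqle (a b : R) : a = b -> a <= b. Proof. by move=> ->. Qed.

Lemma mut_term S i : c0 \notin S -> i \in S ->
  1 / tf S * kap * (rho (L S) * pi (L S)) / Z <=
  \sum_j r / tf S * wM i j * (h (j |: S) - h S).
Proof.
move=> cS iS.
have F0 := tf_gt0 S.
have Z0 := Z_gt0.
have [lt|eqL] : (L S < n.-1)%N \/ L S = n.-1.
  by have := L_le S; rewrite leq_eqVlt => /orP [/eqP ->|->]; [right|left].
- pose A := [set j | (j \notin S) && (j != c0)].
  apply: (le_trans (y := \sum_j (if j \in A then r / tf S * kap * (pi (L S) / Z) else 0))).
    rewrite -big_mkcond sumr_const cardA //= /rho lt -mulr_natr.
    by apply: eqle; field; rewrite ?gt_eqF.
  apply: ler_sum => j _; case: ifP => jA.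
    move: jA; rewrite inE => /andP [jS jc].
    have ij : i != j by apply: contraNneq jS => <-.
    by rewrite wM_off // dh_add.
  by apply: mulr_ge0; [apply: coefM_ge0|rewrite subr_ge0; apply: h_mono].
- rewrite (bigD1 c0) //=.
  have ic : i != c0 by apply: contraNneq cS => <-.
  rewrite wM_off // dh_full // -eqL.
  apply: ler_wpDr.
    apply: sumr_ge0 => j _.
    by apply: mulr_ge0; [apply: coefM_ge0|rewrite subr_ge0; apply: h_mono].
  rewrite eqL /rho ltnn mulr1.
  by apply: eqle; field; rewrite ?gt_eqF.
Qed.


Lemma res_c0 S : c0 \notin S ->
  \sum_j 1 / tf S * wR c0 j * (h (S :\ j) - h S) =
  (- (1 / tf S * kap * pi (L S).-1 / Z)) *+ #|S|.
Proof.
move=> cS.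
rewrite (eq_bigr (fun j => if j \in S then - (1 / tf S * kap * pi (L S).-1 / Z) else 0)).
  by rewrite -big_mkcond sumr_const; congr (_ *+ _); apply: eq_card.
move=> j _; case: ifP => jS.
  have cj : c0 != j by apply: contraNneq cS => ->.
  by rewrite wR_c0 // dh_del // mulrN !mulrA.
by rewrite setD1_id ?jS // subrr mulr0.
Qed.

Lemma res_other S i : c0 \notin S -> i != c0 ->
  \sum_j 1 / tf S * wR i j * (h (S :\ j) - h S) = 0.
Proof.
move=> cS ic; apply: big1 => j _.
rewrite wR_leaf //; case: ifP => [/andP [_ /eqP ->]|_]; last by rewrite mulr0 mul0r.
by rewrite setD1_id // subrr mulr0.
Qed.

Lemma Ph_ge S : h S <= \sum_T P S T * h T.
Proof.
rewrite -subr_ge0 transD.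
have F0 := tf_gt0 S.
have Z0 := Z_gt0.
case: (boolP (c0 \in S)) => cS.
  apply: sumr_ge0 => i _; apply: sumr_ge0 => j _; case: ifP => iS.
    by apply: mulr_ge0; [apply: coefM_ge0|rewrite subr_ge0; apply: h_mono].
  have ic : i != c0 by apply: contraFneq iS => ->.
  rewrite wR_leaf //; case: ifP => [/andP [_ /eqP ->]|_]; last by rewrite mulr0 mul0r.
  have ST : S != finset.setT by apply: (@notT _ i); rewrite iS.
  have ST' : S :\ c0 != finset.setT by apply: (@notT _ c0); rewrite !inE eqxx.
  by rewrite (h_nT ST) (h_nT ST') LD1c subrr mulr0.
rewrite (bigID (fun i => i \in S)) /=.
under eq_bigr => i iS do rewrite iS.
under [X in 0 <= _ + X]eq_bigr => i iS do rewrite (negbTE iS).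
rewrite [X in 0 <= _ + X](bigD1 c0) //=.
rewrite [X in _ + (_ + X)]big1 ?addr0; last by move=> i /andP [iS ic]; apply: res_other.
rewrite res_c0 //.
set k := L S.
have kS : #|S| = k by rewrite /k L_noc.
apply: (le_trans (y := (1 / tf S * kap * (rho k * pi k) / Z) *+ #|S|
                      - (1 / tf S * kap * pi k.-1 / Z) *+ #|S|)).
  case: k kS => [|k] kS; first by rewrite kS !mulr0n subrr.
  by rewrite [rho _ * _]mulrC pi_rec /= subrr.
rewrite mulNrn lerD2r.
have -> : #|S| = #|[pred i | i \in S]| by apply: eq_card.
rewrite -sumr_const; apply: ler_sum => i iS.
exact: mut_term.
Qed.

Lemma dsum_ge (f : 'I_n -> 'I_n -> R) a b :
  (forall i j, 0 <= f i j) -> f a b <= \sum_i \sum_j f i j.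
Proof.
move=> f0; rewrite (bigD1 a) //= (bigD1 b) //= -addrA lerDl.
apply: addr_ge0; first by apply: sumr_ge0 => j _.
by apply: sumr_ge0 => i _; apply: sumr_ge0 => j _.
Qed.

Lemma q_pos S : S != finset.setT -> h S = 0 \/ 0 < qf R n wR wM r h S.
Proof.
move=> ST.
case: (eqVneq S finset.set0) => [->|S0]; first by left; exact: h0.
right; rewrite /qf (transE R n wR wM r S (fun T => (h T - h S) ^+ 2)) /=.
have F0 := tf_gt0 S.
have Z0 := Z_gt0.
pose f := fun i j => (if i \in S
       then r / tf S * wM i j * (h (j |: S) - h S) ^+ 2
       else 1 / tf S * wR i j * (h (S :\ j) - h S) ^+ 2).
change (0 < \sum_i \sum_j f i j).
have tge0 : forall i j, 0 <= f i j.
  move=> i j; rewrite /f; case: ifP => _; apply: mulr_ge0; rewrite ?sqr_ge0 //.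
    exact: coefM_ge0.
  exact: coefR_ge0.
case: (boolP (c0 \in S)) => cS.
  have [j _ jS] : exists2 j, j \in finset.setT & j \notin S.
    by apply/subsetPn; rewrite finset.subTset.
  apply: (lt_le_trans _ (dsum_ge _ c0 j tge0)); rewrite /f cS.
  have cj : c0 != j by apply: contraNneq jS => <-.
  rewrite wM_off //; apply: mulr_gt0.
    by apply: mulr_gt0; [apply: divr_gt0|apply: kap_gt0].
  have := @h_strict _ _ jS; rewrite eq_sym => /(_ cj) hs.
  by apply: exprn_gt0; rewrite subr_gt0.
have [i iS] : exists i, i \in S by apply/finset.set0Pn.
apply: (lt_le_trans _ (dsum_ge _ c0 i tge0)); rewrite /f (negbTE cS).
have ci : c0 != i by apply: contraNneq cS => ->.
rewrite wR_c0 // dh_del //; apply: mulr_gt0.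
  by apply: mulr_gt0; [apply: divr_gt0|apply: kap_gt0].
rewrite sqrrN; apply: exprn_gt0; apply: divr_gt0 => //; apply: pi_gt0.
Qed.

Lemma fix_ge i : h [set i] <= fixation_from wR wM r [set i].
Proof.
exact: (@fix_lower R n wR wM r Pge0 Psum [set i] _ h h01 hT Ph_ge q_pos).
Qed.

Lemma h1 i : h [set i] = if i == c0 then 0 else 1 / Z.
Proof.
have iT : [set i] != finset.setT.
  have [j ji] : exists j, j != i.
    case: (eqVneq i c0) => [->|ic]; last by exists c0; rewrite eq_sym.
    have n1 : (1 < n)%N by apply: leq_trans hn.
    by exists (Ordinal n1); rewrite -val_eqE.
  by apply: (@notT _ j); rewrite inE.
rewrite (h_nT iT) /L; case: (eqVneq i c0) => [->|ic].
  by rewrite finset.setDv cards0 g0.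
rewrite (_ : [set i] :\ c0 = [set i]) ?cards1.
  by rewrite /g big_nat1 /= mul1r.
by apply: setD1_id; rewrite inE eq_sym.
Qed.

Lemma fprob_ge : (n.-1)%:R / n%:R / Z <= fixation_prob wR wM r.
Proof.
rewrite /fixation_prob.
apply: (le_trans (y := n%:R^-1 * \sum_i h [set i])); last first.
  apply: ler_wpM2l; first by rewrite invr_ge0 ler0n.
  by apply: ler_sum => i _; apply: fix_ge.
rewrite (bigD1 c0) //= h1 eqxx add0r.
rewrite (eq_bigr (fun=> 1 / Z)); last by move=> i ic; rewrite h1 (negbTE ic).
rewrite sumr_const.
have -> : #|[pred i | i != c0]| = n.-1.
  by rewrite -(card_neq c0); apply: eq_card => x; rewrite !inE eq_sym.
apply: eqle; rewrite -mulr_natr; field.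
by rewrite gt_eqF ?Z_gt0 // pnatr_eq0 -lt0n n0.
Qed.

Lemma rho_anti i : rho i.+1 <= rho i.
Proof.
rewrite /rho; apply: ler_wpM2l; first exact: ltW.
case: (ltnP i.+1 n.-1) => h1.
  rewrite (ltnW h1) ler_nat; lia.
case: (ltnP i n.-1) => h2 //.
rewrite (_ : (n.-1 - i)%N = 1%N) //; lia.
Qed.

Lemma pi_closed (j : nat) : (j <= n - 2)%N ->
  pi j * r ^+ j * ((n - 2)`!)%:R = ((n - 2 - j)`!)%:R.
Proof.
elim: j => [|j IH] hj; first by rewrite /= expr0 mulr1 mul1r subn0.
have hj' : (j <= n - 2)%N by apply: ltnW.
have lt : (j.+1 < n.-1)%N by lia.
have e1 : (n - 2 - j)%N = (n - 2 - j.+1).+1 by lia.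
have e2 : (n.-1 - j.+1)%N = (n - 2 - j.+1).+1 by lia.
have IH' := IH hj'.
rewrite e1 factS natrM in IH'.
rewrite /= /rho lt e2.
set m := (n - 2 - j.+1)%N in IH' *.
have mpos : (m.+1%:R : R) != 0 by rewrite pnatr_eq0.
have -> : pi j / (r * m.+1%:R) * r ^+ j.+1 * ((n - 2)`!)%:R =
          (pi j * r ^+ j * ((n - 2)`!)%:R) / m.+1%:R.
  by rewrite exprS; field; rewrite ?nat1r ?mpos ?gt_eqF.
by rewrite IH'; field; rewrite ?nat1r ?mpos.
Qed.

Lemma pi1 : pi 1 = (r * (n - 2)%N%:R)^-1.
Proof.
have lt : (1 < n.-1)%N by lia.
by rewrite /= /rho lt (_ : (n.-1 - 1)%N = (n - 2)%N) ?mul1r //; lia.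
Qed.

Lemma pi2 : pi 2 = (r ^+ 2 * (n - 2)%N%:R * (n - 3)%N%:R)^-1.
Proof.
have lt : (2 < n.-1)%N by lia.
rewrite /= -/(pi 1) pi1 /rho lt (_ : (n.-1 - 2)%N = (n - 3)%N); last by lia.
have a : ((n - 2)%N%:R : R) != 0 by rewrite pnatr_eq0; lia.
have b : ((n - 3)%N%:R : R) != 0 by rewrite pnatr_eq0; lia.
by field; rewrite a b gt_eqF.
Qed.

Lemma pi_last (Hr : 1 < r ^+ (n - 2) * ((n - 4)`!)%:R) : pi n.-1 <= pi 2.
Proof.
have e1 : n.-1 = (n - 2).+1 by lia.
have cA := @pi_closed (n - 2) (leqnn (n - 2)).
have cB : pi 2 * r ^+ 2 * ((n - 2)`!)%:R = ((n - 4)`!)%:R.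
  by rewrite pi_closed; [rewrite (_ : (n - 2 - 2)%N = (n - 4)%N) //; lia | lia].
rewrite subnn fact0 in cA.
rewrite e1 /= /rho (_ : ((n - 2).+1 < n.-1)%N = false); last by lia.
rewrite mulr1.
set A := pi (n - 2) in cA *; set B := pi 2 in cB *.
set X := ((n - 2)`!)%:R in cA cB *; set y := ((n - 4)`!)%:R in cB Hr *.
have X0 : 0 < X by rewrite ltr0n fact_gt0.
have y1 : 1 <= y by rewrite ler1n fact_gt0.
have en : (n - 2 = (n - 3).+1)%N by lia.
rewrite en exprS in cA; rewrite en exprSr in Hr.
set q := r ^+ (n - 3) in cA Hr.
have q0 : 0 <= q by rewrite exprn_ge0 // ltW.
have qy : 1 <= q * y.
  case: (lerP r 1) => hr.
    have qy0 : 0 <= q * y by apply: mulr_ge0 => //; apply: le_trans y1.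
    have : q * y * r <= q * y * 1 by apply: ler_wpM2l.
    have -> : q * y * r = q * r * y by ring.
    lra.
  have q1 : 1 <= q by rewrite exprn_ege1 // ltW.
  by rewrite -[1]mulr1; apply: ler_pM.
rewrite ler_pdivrMr //.
have qp : 0 < q by rewrite exprn_gt0.
have rqX : 0 < r * q * r * X by rewrite !mulr_gt0.
rewrite -(ler_pM2r rqX).
have -> : A * (r * q * r * X) = r * (A * (r * q) * X) by ring.
have -> : B * r * (r * q * r * X) = r * q * (B * r ^+ 2 * X) by ring.
rewrite cA cB mulr1 -mulrA ler_pMr //.
Qed.

Lemma pi_mid (Hr : 1 < r ^+ (n - 2) * ((n - 4)`!)%:R) (j : nat) :
  (2 <= j <= n.-1)%N -> pi j <= pi 2.
Proof.
move=> hj.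
have := @valley R pi (fun i => (rho i.+1)^-1) 2 _ _ _ n.-1 j hj.
rewrite (_ : Num.max (pi 2) (pi n.-1) = pi 2) //; last first.
  by apply/max_idPl; apply: pi_last.
apply.
- by move=> i.
- by move=> i; apply: ltW; apply: pi_gt0.
- move=> i _; rewrite lef_pV2 ?posrE ?rho_gt0 //; exact: rho_anti.
Qed.

Lemma Zb (Hr : 1 < r ^+ (n - 2) * ((n - 4)`!)%:R) :
  Z <= 1 + (r * (n - 2)%N%:R)^-1 + (r ^+ 2 * (n - 3)%N%:R)^-1.
Proof.
rewrite /Z big_ltn; last by apply: n0.
rewrite big_ltn; last by lia.
rewrite /= -/(pi 1) pi1 addrA lerD2l.
apply: (le_trans (y := \sum_(2 <= j < n) pi 2)).
  apply: ler_sum_nat => j /andP [j2 jn]; apply: pi_mid => //.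
  by rewrite j2 /=; lia.
rewrite sumr_const_nat pi2.
have a : ((n - 2)%N%:R : R) != 0 by rewrite pnatr_eq0; lia.
have b : ((n - 3)%N%:R : R) != 0 by rewrite pnatr_eq0; lia.
apply: eqle; rewrite -mulr_natr; field; by rewrite a b gt_eqF.
Qed.

End Model.
Lemma pow_hyp (R : realType) (n : nat) (r : R) : (4 <= n)%N -> 0 < r ->
  ((n - 4)`!)%N%:R `^ (- ((n - 2)%N%:R)^-1) < r ->
  1 < r ^+ (n - 2) * ((n - 4)`!)%:R.
Proof.
move=> hn r0 Hp.
set y : R := ((n - 4)`!)%:R in Hp *.
have y0 : 0 < y by rewrite ltr0n fact_gt0.
have m0 : 0 < ((n - 2)%N%:R : R) by rewrite ltr0n; lia.
have : (y `^ (- ((n - 2)%N%:R)^-1)) `^ ((n - 2)%N%:R) < r `^ ((n - 2)%N%:R).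
  by apply: gt0_ltr_powR => //; rewrite nnegrE ?powR_ge0 ?ltW.
rewrite -powRrM mulNr mulVf ?gt_eqF // powR_inv1 ?(ltW y0) // powR_mulrn ?(ltW r0) //.
by move=> H; rewrite -(ltr_pM2r y0) mulVf ?gt_eqF // in H.
Qed.

Theorem theorem3 (R : realType) (n : nat) (r : R) :
  (4 <= n)%N -> 0 < r ->
  ((n - 4)`!)%N%:R `^ (- ((n - 2)%N%:R)^-1) < r ->
  let f := fixation_prob (star_weights R n) (clique_weights R n) r in
  let B := (1 - n%:R^-1) /
           (1 + (r * (n - 2)%N%:R)^-1 + (r ^+ 2 * (n - 3)%N%:R)^-1) in
  B <= f /\
  1 - n%:R^-1 - (r * (n - 2)%N%:R)^-1 - (r ^+ 2 * (n - 3)%N%:R)^-1 < B.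
Proof.
move=> hn r0 Hp f B.
have Hr := @pow_hyp R n r hn r0 Hp.
have Zb' := @Zb R n r hn r0 Hr.
have Z0 := @Z_gt0 R n r hn r0.
have fge := @fprob_ge R n r hn r0.
have n0' : 0 < (n%:R : R) by rewrite ltr0n; lia.
have ce : (n.-1)%:R / n%:R = 1 - (n%:R : R)^-1.
  rewrite -subn1 natrB; last by lia.
  by rewrite mulrBl divff ?gt_eqF // mul1r.
rewrite ce in fge.
set a := (r * (n - 2)%N%:R)^-1 in Zb' B *.
set b := (r ^+ 2 * (n - 3)%N%:R)^-1 in Zb' B *.
set c := 1 - (n%:R : R)^-1 in fge B *.
have a0 : 0 < a by rewrite invr_gt0 mulr_gt0 // ltr0n; lia.
have b0 : 0 < b by rewrite invr_gt0 mulr_gt0 ?exprn_gt0 // ltr0n; lia.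
have c1 : c < 1 by rewrite /c ltrBlDr ltrDl invr_gt0.
have c0 : 0 <= c.
  rewrite /c subr_ge0 invf_le1 //; rewrite ler1n; lia.
have D0 : 0 < 1 + a + b by lra.
split.
  apply: (le_trans _ fge); rewrite /B; apply: ler_wpM2l => //.
  by rewrite lef_pV2 ?posrE.
rewrite /B ltr_pdivlMr //; nra.
Qed.
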